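(* Let $(A,E)$ be the direct producted noncommutative probability space over $D_N$ of noncommutative probability spaces $(A_1,\varphi_1),\dots,(A_N,\varphi_N)$. For $j=1,\dots,N$ let $A_j^{\wedge}=\mathbb{C}\times\cdots\times\mathbb{C}\times A_j\times\mathbb{C}\times\cdots\times\mathbb{C}$, i.e. the subalgebra of $A$ of tuples whose $j$-th coordinate is arbitrary in $A_j$ and whose $i$-th coordinate is a scalar multiple of $1_{A_i}$ for $i\neq j$. Then $A_1^{\wedge},\dots,A_N^{\wedge}$ are free from each other over $D_N$ in $(A,E)$.
   Context: Each $(A_j,\varphi_j)$ is a unital complex algebra with a linear functional. $A=\times_{j=1}^N A_j$ with componentwise operations; $D_N=\mathbb{C}^N$ with componentwise operations, identified with the central subalgebra $\{(\alpha_1 1,\dots,\alpha_N 1)\}$ of $A$; $E((a_1,\dots,a_N))=(\varphi_1(a_1),\dots,\varphi_N(a_N))$. $D_N$-valued cumulants: $k_n(y_1,\dots,y_n)=\sum_{\pi\in NC(n)}\prod_{V\in\pi}E(\prod_{l\in V}y_l)\,\mu(\pi,1_n)$. Subalgebras containing $D_N$ are free over $D_N$ if all their mixed $D_N$-valued cumulants vanish. *)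

(* Defs.v *)
From HB Require Import structures.
From mathcomp Require Import all_boot all_order all_algebra.
From mathcomp Require Import reals complex.

Set Implicit Arguments.
Unset Strict Implicit.
Unset Printing Implicit Defensive.

Import Order.TTheory GRing.Theory Num.Theory.
Local Open Scope ring_scope.

Definition is_set_partition (n : nat) (pi : {set {set 'I_n}}) : bool :=
  partition pi [set: 'I_n].

Definition noncrossing (n : nat) (pi : {set {set 'I_n}}) : bool :=
  [forall a : 'I_n, forall b : 'I_n, forall c : 'I_n, forall d : 'I_n,
     [&& (a < b)%N, (b < c)%N, (c < d)%N,
         pblock pi a == pblock pi c & pblock pi b == pblock pi d]
     ==> (pblock pi a == pblock pi b)].

Definition is_NC (n : nat) (pi : {set {set 'I_n}}) : bool :=
  is_set_partition pi && noncrossing pi.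

Definition refines (n : nat) (pi rho : {set {set 'I_n}}) : bool :=
  [forall V in pi, exists W in rho, V \subset W].

Definition one_part (n : nat) : {set {set 'I_n}} := [set [set: 'I_n]].

(* Strictly coarser partitions have strictly fewer blocks, so fuel n
   (the maximal number of blocks) suffices. *)
Fixpoint mobius_fuel (C : nzRingType) (n : nat) (k : nat)
    (pi : {set {set 'I_n}}) : C :=
  if pi == one_part n then 1 else
  match k with
  | 0 => 0
  | k'.+1 =>
      - \sum_(rho : {set {set 'I_n}} |
                [&& is_NC rho, refines pi rho & rho != pi])
          mobius_fuel C k' rho
  end.

Definition mobius_NC (C : nzRingType) (n : nat) (pi : {set {set 'I_n}}) : C :=
  mobius_fuel C n pi.

Section DirectProduct.
Variable R : realType.
Local Notation C := (R[i]).
Variable N : nat.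
Variable A : 'I_N -> algType C.

Definition prodA : Type := forall j : 'I_N, A j.
Definition mulA (x y : prodA) : prodA := fun j => x j * y j.
Definition oneA : prodA := fun j => 1.

Definition DN : Type := 'I_N -> C.
Definition DN_embed (a : DN) : prodA := fun j => a j *: (1 : A j).

Definition Eprod (phi : forall j : 'I_N, {scalar A j}) (x : prodA) : DN :=
  fun j => phi j (x j).

(* D_N-valued cumulant
   k_n(y_1..y_n) = sum_{pi in NC(n)} prod_{V in pi} E(prod_{l in V} y_l) mu(pi,1_n),
   with the product over l in V taken in increasing order of l in A, and the
   operations of D_N (sum, product, scalar) computed componentwise. *)
Definition DN_cumulant (phi : forall j : 'I_N, {scalar A j}) (n : nat)
    (y : 'I_n -> prodA) : DN :=
  fun j => \sum_(pi : {set {set 'I_n}} | is_NC pi)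
             (\prod_(V in pi) Eprod phi (\big[mulA/oneA]_(l in V) y l) j)
             * mobius_NC C pi.

(* Subalgebras B_1..B_N (as predicates on A, each containing D_N) are free over
   D_N iff all mixed D_N-valued cumulants vanish: for every n >= 1, every
   choice of indices i_1..i_n not all equal and y_l in B_{i_l},
   k_n(y_1,...,y_n) = 0. *)
Definition free_over_DN (phi : forall j : 'I_N, {scalar A j})
    (B : 'I_N -> prodA -> Prop) : Prop :=
  forall (n : nat) (ind : 'I_n.+1 -> 'I_N) (y : 'I_n.+1 -> prodA),
    (forall l, B (ind l) (y l)) ->
    (exists l l', ind l != ind l') ->
    DN_cumulant phi y = (fun _ => 0).

Definition hat_subalg (j : 'I_N) (x : prodA) : Prop :=
  forall i : 'I_N, i != j -> exists c : C, x i = c *: (1 : A i).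

End DirectProduct.

(* Main.v *)
Require Import Defs.
From HB Require Import structures.
From mathcomp Require Import all_boot all_order all_algebra.
From mathcomp Require Import reals complex.
From Stdlib Require Import FunctionalExtensionality.
Set Implicit Arguments.
Unset Strict Implicit.
Unset Printing Implicit Defensive.
Import Order.TTheory GRing.Theory Num.Theory.
Local Open Scope ring_scope.
Section Parts.
Variable n : nat.
Implicit Types P Q : {set {set 'I_n}}.

Lemma partE P : is_set_partition P -> [/\ cover P = setT, trivIset P & set0 \notin P].
Proof. by case/and3P => /eqP -> -> ->. Qed.

Lemma pb_in P x : is_set_partition P -> x \in pblock P x.
Proof. by case/partE => cP _ _; rewrite mem_pblock cP inE. Qed.

Lemma pb_mem P x : is_set_partition P -> pblock P x \in P.
Proof. by case/partE => cP _ _; rewrite pblock_mem // cP inE. Qed.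

Lemma pb_same P x y : is_set_partition P -> y \in pblock P x -> pblock P y = pblock P x.
Proof. by case/partE => _ tP _; apply: same_pblock. Qed.

Lemma pb_eq P x y : is_set_partition P -> (pblock P x == pblock P y) = (y \in pblock P x).
Proof. by case/partE => cP tP _; rewrite eq_pblock // cP inE. Qed.

Lemma pb_sym P x y : is_set_partition P -> y \in pblock P x -> x \in pblock P y.
Proof. by move=> HP H; rewrite (pb_same HP H) pb_in. Qed.

Lemma pb_trans P x y z : is_set_partition P -> y \in pblock P x -> z \in pblock P y -> z \in pblock P x.
Proof. by move=> HP H1 H2; rewrite -(pb_same HP H1). Qed.

Lemma pb_def P V x : is_set_partition P -> V \in P -> x \in V -> pblock P x = V.
Proof. by case/partE => _ tP _; apply: def_pblock. Qed.

Lemma refinesP P Q : is_set_partition P -> is_set_partition Q ->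
  reflect (forall x y, y \in pblock P x -> y \in pblock Q x) (refines P Q).
Proof.
move=> HP HQ; apply: (iffP forallP) => [H x y Hy | H V].
  have /existsP[W /andP[WQ sW]] := implyP (H (pblock P x)) (pb_mem x HP).
  have xW : x \in W by apply: (subsetP sW); apply: pb_in.
  by rewrite (pb_def HQ WQ xW); apply: (subsetP sW).
apply/implyP => VP; have [_ _ n0] := partE HP.
have /set0Pn[x xV] : V != set0 by apply: contraNneq n0 => <-.
apply/existsP; exists (pblock Q x); rewrite pb_mem //=.
apply/subsetP => y yV; apply: H; by rewrite (pb_def _ VP xV).
Qed.

Lemma part_eq P Q : is_set_partition P -> is_set_partition Q ->
  (forall x y, (y \in pblock P x) = (y \in pblock Q x)) -> P = Q.
Proof.
move=> HP HQ H.
rewrite -(equivalence_partition_pblock HP) -(equivalence_partition_pblock HQ).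
rewrite /equivalence_partition; apply: eq_imset => x; apply/setP => y.

by rewrite !inE H.
Qed.

Lemma refines_refl P : refines P P.
Proof. by apply/forallP => V; apply/implyP => VP; apply/existsP; exists V; rewrite VP subxx. Qed.

Lemma card_part P : is_set_partition P -> (#|P| <= n)%N.
Proof.
move=> HP; have := card_partition HP; rewrite cardsT card_ord => E.
rewrite [X in (_ <= X)%N]E -sum1_card; apply: leq_sum => V VP; rewrite card_gt0.
by case/partE: HP => _ _ n0; apply: contraNneq n0 => <-.
Qed.

Lemma card_lt P Q : is_set_partition P -> is_set_partition Q ->
  refines P Q -> Q != P -> (#|Q| < #|P|)%N.
Proof.
move=> HP HQ /(refinesP HP HQ) R neq.
pose f (V : {set 'I_n}) := if [pick x in V] is Some x then pblock Q x else set0.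
have fP x : f (pblock P x) = pblock Q x.
  rewrite /f; case: pickP => [z zV|/(_ x)]; last by rewrite pb_in.
  by apply: pb_same => //; apply: R.
have fim : f @: P = Q.
  apply/setP => W; apply/imsetP/idP => [[V VP ->]|WQ].
    have [_ _ n0] := partE HP.
    have /set0Pn[x xV] : V != set0 by apply: contraNneq n0 => <-.
    by rewrite -(pb_def _ VP xV) // fP pb_mem.
  have [_ _ n0] := partE HQ.
  have /set0Pn[x xW] : W != set0 by apply: contraNneq n0 => <-.
  by exists (pblock P x); rewrite ?pb_mem // fP (pb_def _ WQ xW).
rewrite -fim ltn_neqAle leq_imset_card andbT.
apply/negP => /imset_injP inj; case/eqP: neq.
apply: part_eq => // x y; apply/idP/idP; last exact: R.
move=> Hy; have := fP y; rewrite (pb_same HQ Hy) -fP => /inj.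
by move=> /(_ (pb_mem _ HP) (pb_mem _ HP)) <-; rewrite pb_in.
Qed.

End Parts.

Section Mob.
Variable n : nat.
Hypothesis n_gt0 : (0 < n)%N.
Implicit Types P Q : {set {set 'I_n}}.

Lemma one_part_part : is_set_partition (one_part n).
Proof.
rewrite /is_set_partition /partition /one_part cover1 eqxx trivIset1 /=.
rewrite inE; apply/eqP => /setP /(_ (Ordinal n_gt0)); by rewrite !inE.
Qed.

Lemma pb_one x : pblock (one_part n) x = setT.
Proof. by apply: pb_def; rewrite ?one_part_part ?inE. Qed.

Lemma card1_one P : is_set_partition P -> (#|P| <= 1)%N -> P = one_part n.
Proof.
move=> HP /card_le1_eqP H; apply: part_eq => //; first exact: one_part_part.
move=> x y; rewrite pb_one inE.
have E := H _ _ (pb_mem x HP) (pb_mem y HP).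
by rewrite -E pb_in.
Qed.

Lemma fuel_stable (C : nzRingType) k P : is_set_partition P -> (#|P| <= k.+1)%N ->
  forall k', (k <= k')%N -> mobius_fuel C k' P = mobius_fuel C k P.
Proof.
elim: k P => [|k IH] P HP cP k' kk'.
  by rewrite (card1_one HP cP); case: k' {kk'} => [|k'] /=; rewrite !eqxx.
case: k' kk' => [//|k'] kk' /=.
case: ifP => // _; congr (- _); apply: eq_bigr => Q /and3P[HQ rQ nQ].
apply: IH => //; first by case/andP: HQ.
have h := card_lt HP (proj1 (andP HQ)) rQ nQ; rewrite -ltnS; exact: leq_trans h cP.
Qed.

End Mob.

Lemma mobius_rec (n : nat) (n_gt0 : (0 < n)%N) (C : nzRingType) (P : {set {set 'I_n}}) : is_NC P -> P != one_part n ->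
  mobius_NC C P = - \sum_(Q : {set {set 'I_n}} | [&& is_NC Q, refines P Q & Q != P])
          mobius_NC C Q.
Proof.
move=> /andP[HP _] nP; rewrite /mobius_NC.
have cP := card_part HP.
case: n n_gt0 P HP nP cP => // n' _ P HP nP cP.
rewrite [mobius_fuel C n'.+1 P]/=.
rewrite (negbTE nP); congr (- _); apply: eq_bigr => Q /and3P[/andP[HQ _] rQ nQ].
have cQ := card_lt HP HQ rQ nQ.
have cQ' : (#|Q| <= (n'.-1).+1)%N.
  apply: leq_trans (leqSpred n'); rewrite -ltnS; exact: leq_trans cQ cP.
by rewrite (@fuel_stable _ (ltn0Sn n') C _ _ HQ cQ' _ (leq_pred n')) (@fuel_stable _ (ltn0Sn n') C _ _ HQ cQ' _ (leq_trans (leq_pred n') (leqnSn n'))).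
Qed.

Section Iso.
Variable n : nat.
Variable m : 'I_n.
Implicit Types P Q : {set {set 'I_n}}.

Definition isoR P : rel 'I_n := fun x y => (x == y) || [&& x != m, y != m & y \in pblock P x].
Definition iso P := equivalence_partition (isoR P) setT.

Lemma isoR_equiv P : is_set_partition P -> {in setT & &, equivalence_rel (isoR P)}.
Proof.
move=> HP x y z _ _ _; split; first by rewrite /isoR eqxx.
rewrite /isoR; case: (eqVneq x y) => [<-//|xy] /= /and3P[xm ym yx].
rewrite xm ym /= (pb_same HP yx).
case: (eqVneq x z) => [<-|xz] /=.
  by rewrite xm pb_in // orbT.
case: (y =P z) => [E|yz] /=; first by rewrite -E ym yx.
by [].
Qed.

Lemma iso_part P : is_set_partition P -> is_set_partition (iso P).
Proof. by move=> HP; apply: equivalence_partitionP; apply: isoR_equiv. Qed.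

Lemma pb_iso P x y : is_set_partition P -> (y \in pblock (iso P) x) = isoR P x y.
Proof. by move=> HP; rewrite pblock_equivalence_partition ?inE //; apply: isoR_equiv. Qed.

Lemma iso_NC P : is_NC P -> is_NC (iso P).
Proof.
case/andP => HP /forallP NC; rewrite /is_NC iso_part //=.
apply/forallP => a; apply/forallP => b; apply/forallP => c; apply/forallP => d.
apply/implyP => /and5P[ab bc cd]; rewrite !pb_eq ?iso_part // !pb_iso //.
rewrite /isoR.
have ac : a != c by rewrite neq_ltn (ltn_trans ab bc).
have bd : b != d by rewrite neq_ltn (ltn_trans bc cd).
rewrite (negbTE ac) (negbTE bd) /= => /and3P[am cm ca] /and3P[bm dm db].
rewrite am bm /=; apply/orP; right.
have := implyP (forallP (forallP (forallP (NC a) b) c) d).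
by rewrite ab bc cd !pb_eq // ca db => /(_ isT).
Qed.

Lemma iso_ref P : is_set_partition P -> refines (iso P) P.
Proof.
move=> HP; apply/refinesP => // [|x y]; first exact: iso_part.
rewrite pb_iso // /isoR => /orP[/eqP <-|/and3P[_ _ //]]; exact: pb_in.
Qed.

Lemma iso_mono P Q : is_set_partition P -> is_set_partition Q ->
  refines P Q -> refines (iso P) (iso Q).
Proof.
move=> HP HQ /(refinesP HP HQ) R; apply/refinesP; rewrite ?iso_part // => x y.
rewrite !pb_iso // /isoR.
by case/orP => [->//|/and3P[xm ym /R yQ]]; rewrite xm ym yQ orbT.
Qed.

Lemma iso_idem P : is_set_partition P -> iso (iso P) = iso P.
Proof.
move=> HP; apply: part_eq; rewrite ?iso_part // => x y.
rewrite (pb_iso _ _ (iso_part HP)) pb_iso // /isoR.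
rewrite [y \in pblock (iso P) x]pb_iso // /isoR.
by case: (x == y); case: (x == m); case: (y == m).
Qed.

Lemma iso_ne_one z P : z != m -> is_set_partition P -> iso P != one_part n.
Proof.
move=> zm HP; apply/eqP => E.
have n0 : (0 < n)%N by case: n z {zm E P HP} => [[]|].
have := pb_iso z m HP; rewrite E pb_one // inE /isoR eqxx andbF orbF.
by rewrite (negbTE zm).
Qed.

End Iso.

Section Main.
Variable n : nat.
Variables m z : 'I_n.
Hypothesis zm : z != m.
Variable C : nzRingType.
Implicit Types P Q : {set {set 'I_n}}.

Let n0 : (0 < n)%N. Proof. exact: leq_ltn_trans (leq0n _) (ltn_ord z). Qed.

Definition Ssum t : C := \sum_(pi : {set {set 'I_n}} | is_NC pi && (iso m pi == t)) mobius_NC C pi.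

Lemma T_zero tau : is_NC tau -> iso m tau = tau ->
  \sum_(rho : {set {set 'I_n}} | is_NC rho && refines tau rho) mobius_NC C rho = 0.
Proof.
move=> Nt It.
have ne : tau != one_part n by rewrite -It (iso_ne_one zm) //; case/andP: Nt.
rewrite (bigD1 tau) /=; last by rewrite Nt refines_refl.
rewrite (mobius_rec n0 C Nt ne) addrC.
rewrite (eq_bigl (fun rho => [&& is_NC rho, refines tau rho & rho != tau])).
  by rewrite subrr.
by move=> rho /=; rewrite andbA.
Qed.

Lemma S_zero tau : is_NC tau -> iso m tau = tau -> Ssum tau = 0.
Proof.
move: {2}#|tau| (erefl #|tau|) => k; elim/ltn_ind: k tau => k IH tau ck Nt It.
have HT := T_zero Nt It.
have Ht : is_set_partition tau by case/andP: Nt.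
rewrite (partition_big (iso m) (fun t => [&& is_NC t, iso m t == t & refines tau t])) /= in HT;
  last first.
  move=> rho /andP[Nr rr]; have Hr : is_set_partition rho by case/andP: Nr.
  rewrite iso_NC // iso_idem // eqxx /=.
  by rewrite -{1}It; apply: iso_mono.
rewrite (bigD1 tau) /= in HT; last by rewrite Nt It eqxx refines_refl.
rewrite [X in _ + X]big1 ?addr0 in HT; last first.
  move=> t /andP[/and3P[Nt' /eqP It' rt] nt].
  rewrite (eq_bigl (fun pi => is_NC pi && (iso m pi == t))).
    apply: (IH #|t|) => //; rewrite -ck; apply: card_lt => //; by case/andP: Nt'.
  move=> pi; case: (boolP (is_NC pi)) => //= Np; case: (eqVneq (iso m pi) t) => [E|]; last by rewrite andbF.
  rewrite andbT; apply/(refinesP Ht (proj1 (andP Np))) => x y Hy.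
  have Hp : is_set_partition pi by case/andP: Np.
  have := iso_ref m Hp => /(refinesP (iso_part m Hp) Hp); apply.
  by move: rt; rewrite -E => /(refinesP Ht (iso_part m Hp)); apply.
rewrite -HT /Ssum; apply: eq_bigl => pi.
case: (boolP (is_NC pi)) => //= Np; case: (eqVneq (iso m pi) tau) => [E|]; last by rewrite andbF.
by rewrite andbT -E iso_ref //; case/andP: Np.
Qed.

Lemma sum_zero (F : {set {set 'I_n}} -> C) :
  (forall pi, is_NC pi -> F pi = F (iso m pi)) ->
  \sum_(pi : {set {set 'I_n}} | is_NC pi) F pi * mobius_NC C pi = 0.
Proof.
move=> HF; rewrite (eq_bigr (fun pi => F (iso m pi) * mobius_NC C pi)); last first.
  by move=> pi Np; rewrite -HF.
rewrite (partition_big (iso m) (fun t => is_NC t && (iso m t == t))) /=; last first.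
  by move=> pi Np; rewrite iso_NC // iso_idem ?eqxx //; case/andP: Np.
apply: big1 => t /andP[Nt /eqP It].
rewrite (eq_bigr (fun pi => F t * mobius_NC C pi)); last by move=> pi /andP[_ /eqP ->].
by rewrite -mulr_sumr -/(Ssum t) S_zero // mulr0.
Qed.

End Main.

Section Prod.
Variable n : nat.
Variable m : 'I_n.
Implicit Types P Q : {set {set 'I_n}}.

Lemma iso_set P : is_set_partition P ->
  iso m P = ([set m] |: [set V :\ m | V in P]) :\ set0.
Proof.
move=> HP; apply/setP => W; rewrite in_setD1 in_setU1.
apply/imsetP/idP => [[x _ ->]|].
  case: (eqVneq x m) => [->|xm].
    have -> : [set y in setT | isoR m P m y] = [set m].
      by apply/setP => y; rewrite !inE /isoR eqxx /= orbF eq_sym.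
    apply/andP; split; last by rewrite eqxx.
    by apply/eqP => /setP /(_ m); rewrite !inE eqxx.
  have -> : [set y in setT | isoR m P x y] = pblock P x :\ m.
    apply/setP => y; rewrite !inE /isoR xm /=.
    case: (eqVneq x y) => [<-|//]; by rewrite xm pb_in.
  apply/andP; split.
    by apply/eqP => /setP /(_ x); rewrite !inE xm pb_in.
  by apply/orP; right; apply: imset_f; apply: pb_mem.
case/andP => W0 /orP[/eqP ->|/imsetP[V VP WE]].
  exists m; rewrite ?inE //; apply/setP => y.
  by rewrite !inE /isoR eqxx /= orbF eq_sym.
subst W; have /set0Pn[x xW] := W0; rewrite !inE in xW; case/andP: xW => xm xV.
have E := pb_def HP VP xV.
exists x; rewrite ?inE //; apply/setP => y; rewrite !inE /isoR xm /= E.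
case: (eqVneq x y) => [<-|//]; by rewrite xm xV.
Qed.

Variable K : comNzRingType.

Lemma prod_setD1_1 (g : {set 'I_n} -> K) (X : {set {set 'I_n}}) a : g a = 1 ->
  \prod_(W in X :\ a) g W = \prod_(W in X) g W.
Proof.
move=> ga; case: (boolP (a \in X)) => aX.
  by rewrite (big_setD1 _ aX) ga /= mul1r.
apply: eq_bigl => W; rewrite in_setD1; case: eqP => // ->; by rewrite (negbTE aX).
Qed.

Lemma prod_iso (g : {set 'I_n} -> K) P : is_set_partition P ->
  g set0 = 1 -> (forall V, g (V :\ m) = g V) ->
  \prod_(W in iso m P) g W = \prod_(V in P) g V.
Proof.
move=> HP g0 gm; rewrite iso_set // prod_setD1_1 //.
rewrite big_setU1 /=; last first.
  apply/imsetP => [[V _ /setP /(_ m)]]; by rewrite !inE eqxx.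
have -> : g [set m] = 1.
  by rewrite -gm -g0; congr g; apply/setP => y; rewrite !inE; case: eqP => // ->.
rewrite mul1r big_imset /=; first by apply: eq_bigr => V _; rewrite gm.
move=> V V' VP V'P E.
have [_ _ n0] := partE HP.
case: (set0Pn (V :\ m)) => [[x xV]|].
  have xV' : x \in V' :\ m by rewrite -E.
  move: xV xV'; rewrite !in_setD1 => /andP[_ xV] /andP[_ xV'].
  by rewrite -(pb_def HP VP xV) (pb_def HP V'P xV').
move=> NV; have V0 : V :\ m = set0 by apply/setP => u; rewrite in_set0; apply/negP => Hu; apply: NV; by exists u.
have V'0 : V' :\ m = set0 by rewrite -E.
have sing U : U \in P -> U :\ m = set0 -> U = [set m].
  move=> UP U0; have /set0Pn[u uU] : U != set0 by apply: contraNneq n0 => <-.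
  have um : u = m.
    apply/eqP; apply: contraTT isT => um.
    by have := in_set0 u; rewrite -U0 in_setD1 um uU.
  apply/setP => y; rewrite inE; apply/idP/eqP => [yU|->]; last by rewrite -um.
  apply/eqP; apply: contraTT isT => ym.
  by have := in_set0 y; rewrite -U0 in_setD1 ym yU.
by rewrite (sing _ VP V0) (sing _ V'P V'0).
Qed.

Lemma prod_c (g : {set 'I_n} -> K) P c : is_set_partition P ->
  \prod_(V in P) ((if m \in V then c else 1) * g V) = c * \prod_(V in P) g V.
Proof.
move=> HP; rewrite big_split /=; congr (_ * _).
rewrite (bigD1 (pblock P m)) ?pb_mem //= pb_in // big1 ?mulr1 //.
move=> V /andP[VP nV]; case: ifP => // mV.
by case/eqP: nV; rewrite (pb_def HP VP mV).
Qed.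

End Prod.

Section Alg.
Variable K : comNzRingType.
Variable B : algType K.
Variable psi : {scalar B}.
Variable n : nat.
Variable m : 'I_n.
Variable x : 'I_n -> B.
Variable c : K.
Hypothesis xm : x m = c *: 1.

Lemma psi_prod (V : {set 'I_n}) : psi (\prod_(l in V) x l) =
  (if m \in V then c else 1) * psi (\prod_(l in V :\ m) x l).
Proof.
rewrite (eq_bigr (fun l => (if l == m then c else 1) *: (if l == m then 1 else x l))); last first.
  by move=> l _; case: eqP => [->|_]; rewrite ?xm ?scale1r.
rewrite scaler_prod linearZ /=; congr (_ * psi _).
  case: (boolP (m \in V)) => mV.
    rewrite (bigD1 m) //= eqxx big1 ?mulr1 // => l /andP[_ /negbTE ->] //.
  by rewrite big1 // => l lV; case: eqP => // E; rewrite -E lV in mV.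
rewrite [RHS](eq_bigl (fun l => (l \in V) && (l != m))); last by move=> l /=; rewrite !inE andbC.
rewrite big_mkcondr /=; apply: eq_bigr => l _; by case: eqP.
Qed.

End Alg.

Theorem mainTheorem6 (R : realType) (N : nat) (A : 'I_N -> algType R[i])
    (phi : forall j : 'I_N, {scalar A j})
    (phi_unital : forall j : 'I_N, phi j 1 = 1) :
  free_over_DN phi (@hat_subalg R N A).
Proof.
move=> n ind y Hy [l [l' Hll']].
apply: functional_extensionality => j.
rewrite /DN_cumulant.
pose m := if ind l != j then l else l'.
have mj : ind m != j.
  rewrite /m; case: ifP => // /negbFE /eqP <-; by rewrite eq_sym.
have [c Hc] : exists c, y m j = c *: 1 by apply: (Hy m); rewrite eq_sym.
pose z := if m == l then l' else l.
have zm : z != m.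
  have ll : l != l' by apply: contraNneq Hll' => ->.
  rewrite /z; case: (eqVneq m l) => [->|]; by rewrite 1?eq_sym.
pose x := fun k => y k j.
have E (V : {set 'I_n.+1}) : Eprod phi (\big[@Defs.mulA _ _ A/@Defs.oneA _ _ A]_(k in V) y k) j
   = phi j (\prod_(k in V) x k).
  rewrite /Eprod; congr (phi j _).
  by apply: (big_morph (fun f : prodA A => f j)).
rewrite (eq_bigr (fun pi : {set {set 'I_n.+1}} => (\prod_(V in pi) phi j (\prod_(k in (V : {set 'I_n.+1})) x k)) * mobius_NC R[i] pi)); last first.
  by move=> pi _; congr (_ * _); apply: eq_bigr => V _; apply: E.
apply: (sum_zero zm) => pi /andP[Hp _].
have Hq := iso_part m Hp.
rewrite (eq_bigr _ (fun V _ => psi_prod (phi j) Hc V)) prod_c //.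
rewrite (eq_bigr _ (fun V _ => psi_prod (phi j) Hc V)) prod_c //.
rewrite prod_iso //.
  by rewrite (_ : set0 :\ m = set0) ?big_set0 ?phi_unital //; apply/setP => u; rewrite !inE andbF.
by move=> V; rewrite (_ : V :\ m :\ m = V :\ m) //; apply/setP => u; rewrite !inE andbA andbb.
Qed.
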